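(* Let $\mathcal{M}$ be a $k\times\ell$ monotone gridding matrix that has a consistent orientation. If the cell graph $G_\mathcal{M}$ is a forest, then every permutation in $\mathrm{Grid}(\mathcal{M})$ has path-width at most $\max(k,\ell)$.
   Context: $\mathrm{Inc}$ and $\mathrm{Dec}$ denote the classes of increasing and decreasing permutations. A $k\times\ell$ monotone gridding matrix $\mathcal{M}$ has entries $\mathcal{M}_{i,j}\in\{\mathrm{Inc},\mathrm{Dec},\emptyset\}$ ($i$ indexes columns left to right, $j$ rows bottom to top). A $k\times\ell$-gridding of a permutation $\pi$ of length $n$ (identified with its diagram $\{(i,\pi_i)\}$) consists of possibly empty disjoint integer intervals $I_1<\dots<I_k$ and $J_1<\dots<J_\ell$, each family with union $[n]$; it is an $\mathcal{M}$-gridding if the points in each cell $I_i\times J_j$ form a pattern in $\mathcal{M}_{i,j}$; $\mathrm{Grid}(\mathcal{M})$ is the class of permutations with an $\mathcal{M}$-gridding. The cell graph $G_\mathcal{M}$ has as vertices the cells with infinite entries, adjacent when they share a row or column and all cells strictly between them are finite or empty. A consistent orientation of $\mathcal{M}$ is a pair of functions $c:[k]\to\{-1,1\}$, $r:[\ell]\to\{-1,1\}$ such that $c(i)r(j)>0$ whenever $\mathcal{M}_{i,j}=\mathrm{Inc}$ and $c(i)r(j)<0$ whenever $\mathcal{M}_{i,j}=\mathrm{Dec}$. Intervalicity $\mathrm{intv}(A)$ of $A\subseteq[n]$ is the least number of disjoint integer intervals with union $A$; the grid-complexity of a point set is the maximum of the intervalicities of its two axis projections. A grid tree of $\pi$ is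 a rooted binary tree whose leaves are labeled bijectively by the points of $\pi$, with grid-width the maximum over vertices $v$ of the grid-complexity of the leaf labels below $v$. The path-width of $\pi$ is the minimum grid-width over grid trees of $\pi$ that are caterpillars (every non-leaf vertex has at least one leaf child). *)

(* Defs.v *)
From mathcomp Require Import all_boot all_order all_fingroup all_algebra.
Set Implicit Arguments. Unset Strict Implicit. Unset Printing Implicit Defensive.
Import GRing.Theory Num.Theory.

Inductive entry := Inc | Dec | Empt.

Definition entry_eqb (a b : entry) : bool :=
  match a, b with Inc, Inc | Dec, Dec | Empt, Empt => true | _, _ => false end.

(* A k x l monotone gridding matrix: M i j, i column (left to right),
   j row (bottom to top).  Indices are 0-based. *)
Definition gmatrix (k l : nat) := 'I_k -> 'I_l -> entry.

(* A permutation pi of length n is an element of 'S_n; its diagram is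
   {(x, pi x) | x : 'I_n} (0-based coordinates). *)

(* A k-gridding of [n] by consecutive, possibly empty, intervals
   I_0 < ... < I_{k-1} with union [n] is encoded by the nondecreasing map
   sending each x in [n] to the index of the interval containing it. *)
Definition interval_partition (n k : nat) (f : 'I_n -> 'I_k) : Prop :=
  forall x y : 'I_n, x <= y -> f x <= f y.

Definition in_cell n k l (pi : 'S_n) (cf : 'I_n -> 'I_k) (rf : 'I_n -> 'I_l)
  (i : 'I_k) (j : 'I_l) (x : 'I_n) : Prop := cf x = i /\ rf (pi x) = j.

Definition cell_ok n k l (pi : 'S_n) (cf : 'I_n -> 'I_k) (rf : 'I_n -> 'I_l)
  (i : 'I_k) (j : 'I_l) (e : entry) : Prop :=
  match e with
  | Inc => forall x y, in_cell pi cf rf i j x -> in_cell pi cf rf i j y ->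
             x < y -> pi x < pi y
  | Dec => forall x y, in_cell pi cf rf i j x -> in_cell pi cf rf i j y ->
             x < y -> pi y < pi x
  | Empt => forall x, ~ in_cell pi cf rf i j x
  end.

Definition is_M_gridding n k l (M : gmatrix k l) (pi : 'S_n)
  (cf : 'I_n -> 'I_k) (rf : 'I_n -> 'I_l) : Prop :=
  interval_partition cf /\ interval_partition rf /\
  forall i j, cell_ok pi cf rf i j (M i j).

Definition in_Grid n k l (M : gmatrix k l) (pi : 'S_n) : Prop :=
  exists cf rf, is_M_gridding M pi cf rf.

Definition nonempty_cell k l (M : gmatrix k l) (c : 'I_k * 'I_l) : bool :=
  ~~ entry_eqb (M c.1 c.2) Empt.

Definition strictly_between (a b x : nat) : bool :=
  (minn a b < x) && (x < maxn a b).

Definition cell_adj k l (M : gmatrix k l) : rel ('I_k * 'I_l) :=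
  fun c d =>
    [&& nonempty_cell M c, nonempty_cell M d, c != d &
     ((c.1 == d.1) &&
        [forall j : 'I_l, strictly_between c.2 d.2 j ==> entry_eqb (M c.1 j) Empt])
     || ((c.2 == d.2) &&
        [forall i : 'I_k, strictly_between c.1 d.1 i ==> entry_eqb (M i c.2) Empt])].

(* A (simple undirected) graph given by a symmetric irreflexive relation is
   a forest if it has no cycle: no duplicate-free closed walk on >= 3
   vertices. *)
Definition forest (T : finType) (e : rel T) : Prop :=
  forall s : seq T, uniq s -> 2 < size s -> ~~ path.cycle e s.

Definition consistent_orientation k l (M : gmatrix k l) : Prop :=
  exists (c : 'I_k -> int) (r : 'I_l -> int),
    (forall i, (c i = 1 \/ c i = -1)%R) /\ (forall j, (r j = 1 \/ r j = -1)%R) /\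
    (forall i j, M i j = Inc -> (0 < c i * r j)%R) /\
    (forall i j, M i j = Dec -> (c i * r j < 0)%R).

(* Intervalicity of a subset B of [n]: the least number of pairwise disjoint
   integer intervals whose union is B.  Nonempty intervals [a,b) inside [n]
   are encoded by pairs (a,b) with a < b <= n. *)
Definition interval_decomp n (B : {set 'I_n}) (D : {set 'I_n.+1 * 'I_n.+1}) : bool :=
  [&& [forall p in D, p.1 < p.2],
      [forall p in D, forall q in D, (p != q) ==>
         [forall x : 'I_n, ~~ ((p.1 <= x < p.2) && (q.1 <= x < q.2))]] &
      [forall x : 'I_n, (x \in B) == [exists p in D, p.1 <= x < p.2]]].

Definition has_decomp_of_size n (B : {set 'I_n}) (m : nat) : bool :=
  [exists D : {set 'I_n.+1 * 'I_n.+1}, (#|D| == m) && interval_decomp B D].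

(* least m (there is always one, m <= n, e.g. singletons) *)
Definition intv n (B : {set 'I_n}) : nat :=
  find (has_decomp_of_size B) (iota 0 n.+1).

Definition grid_complexity n (pi : 'S_n) (A : {set 'I_n}) : nat :=
  maxn (intv A) (intv (pi @: A)).

(* Rooted binary trees with leaves labelled by points (identified with their
   x-coordinate x : 'I_n, the point being (x, pi x)). *)
Inductive gtree (n : nat) :=
  | Leaf of 'I_n
  | Node of gtree n & gtree n.

Fixpoint leaves n (t : gtree n) : seq 'I_n :=
  match t with Leaf x => [:: x] | Node a b => leaves a ++ leaves b end.

Definition is_leaf n (t : gtree n) : bool :=
  if t is Leaf _ then true else false.

Definition grid_tree n (t : gtree n) : Prop := perm_eq (leaves t) (enum 'I_n).

Fixpoint grid_width n (pi : 'S_n) (t : gtree n) : nat :=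
  match t with
  | Leaf x => grid_complexity pi [set x]
  | Node a b => maxn (grid_complexity pi [set x in leaves t])
                     (maxn (grid_width pi a) (grid_width pi b))
  end.

Fixpoint caterpillar n (t : gtree n) : bool :=
  match t with
  | Leaf _ => true
  | Node a b => (is_leaf a || is_leaf b) && caterpillar a && caterpillar b
  end.

Definition pathwidth_le n (pi : 'S_n) (w : nat) : Prop :=
  exists t : gtree n, grid_tree t /\ caterpillar t /\ grid_width pi t <= w.

(* Main.v *)
Require Import Defs.
From mathcomp Require Import all_boot all_order all_fingroup all_algebra.
From mathcomp Require Import zify.
Set Implicit Arguments. Unset Strict Implicit. Unset Printing Implicit Defensive.

Definition bn n (B : {set 'I_n}) (y : nat) :=
  [exists z : 'I_n, (z \in B) && (val z == y)].

Lemma bnE n (B : {set 'I_n}) (z : 'I_n) : bn B z = (z \in B).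
Proof.
apply/existsP/idP => [[w /andP[wB /eqP /val_inj <-]] // | zB].
by exists z; rewrite zB eqxx.
Qed.

Lemma bn_ge n (B : {set 'I_n}) y : n <= y -> bn B y = false.
Proof.
move=> ny; apply/existsP => -[w /andP[_ /eqP wy]].
have := ltn_ord w; rewrite wy; lia.
Qed.

Lemma bn_lt n (B : {set 'I_n}) y : bn B y -> y < n.
Proof. by case: (leqP n y) => // /(bn_ge B) ->. Qed.

Lemma exE n (B : {set 'I_n}) x : exists y, (x <= y) && ~~ bn B y.
Proof. by exists (maxn x n); rewrite leq_maxl bn_ge // leq_maxr. Qed.

Definition Eend n (B : {set 'I_n}) x := ex_minn (@exE n B x).

Lemma Eend_spec n (B : {set 'I_n}) x :
  [/\ x <= Eend B x, ~~ bn B (Eend B x), Eend B x <= maxn x n &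
      forall y, x <= y -> y < Eend B x -> bn B y].
Proof.
rewrite /Eend; case: ex_minnP => e /andP[xe ne] emin; split => //.
  by apply: emin; rewrite leq_maxl bn_ge // leq_maxr.
move=> y xy ye; case: (boolP (bn B y)) => // ny.
have := emin y; rewrite xy ny => /(_ isT); lia.
Qed.

Lemma intv_le n (B : {set 'I_n}) m :
  has_decomp_of_size B m -> m <= n -> intv B <= m.
Proof.
move=> hd mn; rewrite /intv.
case: (leqP (find (has_decomp_of_size B) (iota 0 n.+1)) m) => // lt.
have := before_find 0 lt; rewrite nth_iota ?add0n ?hd //; lia.
Qed.

Section IntvBound.
Variables (n m : nat) (B : {set 'I_n}) (f : 'I_n -> 'I_m).
Hypothesis fmono : forall x y : 'I_n, x <= y -> f x <= f y.
Hypothesis convex : forall x y z : 'I_n, x < y -> y < z -> x \in B -> z \in B ->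
  f x = f z -> y \in B.

Definition starts := [set x : 'I_n | (x \in B) && ((nat_of_ord x == 0) || ~~ bn B (nat_of_ord x).-1)].

Lemma starts_card : #|starts| <= m.
Proof.
have inj : {in starts &, injective f}.
  have key : forall x y : 'I_n, x \in starts -> y \in starts -> x < y -> f x = f y -> False.
    move=> x y; rewrite !inE => /andP[xB _] /andP[yB /orP[/eqP y0|ny]] xy fxy.
      by rewrite y0 in xy.
    have ylt := ltn_ord y.
    have := subn1 y => sy.
    have w_lt : (nat_of_ord y).-1 < n by lia.
    pose w := Ordinal w_lt.
    have [wx | wx] := eqVneq (nat_of_ord w) (nat_of_ord x).
      have wx' : w = x by apply: val_inj.
      by move: ny; rewrite (_ : (nat_of_ord y).-1 = nat_of_ord w) // wx' bnE xB.
    have wv : nat_of_ord w = (nat_of_ord y).-1 by [].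
    have xw : x < w by lia.
    have wy : w < y by lia.
    have := fmono (ltnW xw); have := fmono (ltnW wy); rewrite -fxy => h1 h2.
    have fw : f x = f y by rewrite fxy.
    have : w \in B by apply: (convex xw wy xB yB fw).
    by rewrite -bnE /= (negbTE ny).
  move=> x y xs ys fxy; case: (ltngtP x y) => [xy|yx|/val_inj //].
    by case: (key _ _ xs ys xy fxy).
  by case: (key _ _ ys xs yx (esym fxy)).
have := card_in_imset inj; move=> <-.
by apply: leq_trans (max_card _) _; rewrite card_ord.
Qed.

Definition gpair (x : 'I_n) : 'I_n.+1 * 'I_n.+1 := (inord x, inord (Eend B x)).

Definition Dset := [set gpair x | x in starts].

Lemma Eend_le (x : 'I_n) : Eend B x <= n.
Proof. have [_ _ h _] := Eend_spec B x; have := ltn_ord x; lia. Qed.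

Lemma gpair1 x : val (gpair x).1 = x.
Proof. by rewrite /= inordK // ltnS ltnW. Qed.
Lemma gpair2 x : val (gpair x).2 = Eend B x.
Proof. by rewrite /= inordK // ltnS Eend_le. Qed.

Lemma Eend_in (x : 'I_n) (y : 'I_n) : x <= y -> y < Eend B x -> y \in B.
Proof. by move=> xy ye; have [_ _ _ h] := Eend_spec B x; rewrite -bnE h. Qed.

Lemma start_exists (z : 'I_n) : z \in B -> exists2 x, x \in starts & x <= z < Eend B x.
Proof.
move=> zB.
have ex : exists y, (y <= z) && [forall w : 'I_n, (y <= w <= z) ==> (w \in B)].
  exists (nat_of_ord z); rewrite leqnn /=; apply/forallP => w; apply/implyP => /andP[a b].
  by rewrite (_ : w = z) // ; apply: val_inj; apply/eqP; rewrite eqn_leq a b.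
case: (ex_minnP ex) => x0 /andP[x0z /forallP allB] xmin.
have x0lt : x0 < n by have := ltn_ord z; lia.
pose x := Ordinal x0lt.
have xB : x \in B by have := allB x; rewrite /= leqnn x0z.
exists x.
  rewrite inE xB /=; case: (x0 =P 0) => //= /eqP x0n.
  apply/negP => hb; have lt := bn_lt hb; have := subn1 x0 => sx.
  pose w := Ordinal lt.
  have : x0.-1 <= z -> [forall w : 'I_n, (x0.-1 <= w <= z) ==> (w \in B)].
    move=> _; apply/forallP => v; apply/implyP => /andP[a b].
    case: (eqVneq (nat_of_ord v) x0.-1) => [e|ne].
      by rewrite -bnE e.
    by have := allB v; rewrite b andbT (_ : x0 <= v) //; lia.
  move=> h; have := xmin x0.-1; rewrite h; [ | lia]; rewrite andbT.
  move=> /(_ _); lia.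
rewrite /= x0z /=.
have [e1 e2 _ _] := Eend_spec B x.
case: (ltnP z (Eend B x)) => // ez.
have elt : Eend B x < n by have := ltn_ord z; lia.
have := allB (Ordinal elt); rewrite /= e1 ez /= => eB.
by move: e2; rewrite (_ : Eend B x = val (Ordinal elt)) // bnE eB.
Qed.

Lemma decomp : has_decomp_of_size B #|starts|.
Proof.
apply/existsP; exists Dset.
have ginj : {in starts &, injective gpair}.
  by move=> x y _ _ e; have := gpair1 x; rewrite e gpair1 => h; apply: val_inj.
rewrite card_in_imset // eqxx /=.
apply/and3P; split.
- apply/forallP => p; apply/implyP => /imsetP[x xs ->].
  rewrite gpair1 gpair2; have [e1 e2 _ _] := Eend_spec B x.
  move: xs; rewrite inE => /andP[xB _].
  case: (ltngtP x (Eend B x)) => //; first lia.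
  by move=> ex; move: e2; rewrite -ex bnE xB.
- apply/forallP => p; apply/implyP => /imsetP[x xs ->].
  apply/forallP => q; apply/implyP => /imsetP[y ys ->].
  apply/implyP => neq; apply/forallP => w; rewrite !gpair1 !gpair2.
  apply/negP => /andP[/andP[xw wx] /andP[yw wy]].
  have xy : nat_of_ord x != nat_of_ord y by apply: contra neq => /eqP /val_inj ->.
  have key : forall x y : 'I_n, x \in starts -> y \in starts -> x < y ->
     x <= w < Eend B x -> y <= w -> False.
    move=> a b; rewrite !inE => /andP[aB _] /andP[bB /orP[/eqP b0|nb]] ab /andP[aw wa] bw.
      by rewrite b0 in ab.
    have blt := ltn_ord b.
    have := subn1 b => sb.
    have lt : (nat_of_ord b).-1 < n by lia.
    have : Ordinal lt \in B by apply: (Eend_in (x:=a)) => /=; lia.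
    by rewrite -bnE /= (negbTE nb).
  case: (ltngtP x y) => [l|l|e]; last by rewrite e eqxx in xy.
    by apply: (key x y xs ys l) => //; rewrite xw wx.
  by apply: (key y x ys xs l) => //; rewrite yw wy.
- apply/forallP => z; apply/eqP; apply/idP/idP => [zB|/existsP[p /andP[/imsetP[x xs ->] /andP[a b]]]].
    have [x xs /andP[a b]] := start_exists zB.
    by apply/existsP; exists (gpair x); rewrite imset_f // gpair1 gpair2 a b.
  by move: a b; rewrite gpair1 gpair2; apply: Eend_in.
Qed.

Lemma intv_bound : intv B <= m.
Proof.
apply: leq_trans (starts_card).
apply: intv_le; first exact: decomp.
by apply: leq_trans (max_card _) _; rewrite card_ord.
Qed.

End IntvBound.

Lemma path_filter (T : eqType) (e : rel T) (keep : pred T) s :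
  forall a b, keep a -> (b = a \/ (e a b /\ ~~ keep b)) ->
  (forall z, z \in b :: s -> ~~ keep z -> forall u v, e u z -> e z v -> e u v) ->
  path e b s -> path e a (filter keep s).
Proof.
elim: s => [//|y s IH] a b ka hab htr /= /andP[eby ps].
have eay : e a y.
  case: hab => [hb|[eab kb]]; first by rewrite -hb.
  apply: (htr b) => //; exact: mem_head.
have htr' : forall z, z \in y :: s -> ~~ keep z -> forall u v, e u z -> e z v -> e u v.
  by move=> z zin; apply: htr; rewrite in_cons zin orbT.
case: ifP => ky /=.
  by rewrite eay /=; apply: (IH y y) => //; left.
by apply: (IH a y) => //; right; rewrite ky.
Qed.

Lemma cycle_filter (T : eqType) (e : rel T) (keep : pred T) x s :
  keep x -> (forall z, z \in x :: s -> ~~ keep z -> forall u v, e u z -> e z v -> e u v) ->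
  path.cycle e (x :: s) -> path.cycle e (filter keep (x :: s)).
Proof.
move=> kx htr /= hc; rewrite kx /=.
have -> : rcons (filter keep s) x = filter keep (rcons s x) by rewrite filter_rcons kx.
apply: (path_filter (b:=x)) => //; first by left.
move=> z; rewrite in_cons mem_rcons in_cons orbA orbb => zin; exact: htr.
Qed.

Lemma trans_cycle_refl (T : eqType) (e : rel T) x s :
  transitive e -> path.cycle e (x :: s) -> e x x.
Proof.
move=> tr /= /(order_path_min tr) /allP; apply; by rewrite mem_rcons mem_head.
Qed.

Lemma pen_lemma (T : finType) (e : rel T) x s w :
  forest e -> symmetric e -> irreflexive e -> path e x s -> uniq (x :: s) ->
  w \in x :: s -> e (last x s) w -> exists q, x :: s = q ++ [:: w; last x s].
Proof.
move=> fo sy ir ps un win evw.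
move Ep : (x :: s) win un => p win un.
case/splitPr: win Ep un => p1 p2 Ep un.
have un2 : uniq (w :: p2) by move: un; rewrite cat_uniq => /and3P[_ _].
have pw : path e w p2 /\ last x s = last w p2.
  move: ps; case: p1 Ep {un} => [[-> ->]//|y p1 [-> ->]]; rewrite cat_path last_cat /=.
  by case/andP => _ /andP[_ ->].
case: pw => pw lst; rewrite lst in evw *.
case: p2 Ep un pw un2 evw lst => [|a [|b r]] Ep un pw un2 evw lst.
- by rewrite /= ir in evw.
- by exists p1.
- exfalso; have hc : path.cycle e (w :: a :: b :: r).
    rewrite /path.cycle (rcons_path e w (a :: b :: r) w) pw /=.
    exact: evw.
  by have := fo (w :: a :: b :: r) un2 isT; rewrite hc.
Qed.

Lemma forest_leaf (T : finType) (e : rel T) (P : pred T) v0 :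
  symmetric e -> irreflexive e -> forest e -> (forall u w, e u w -> P w) -> P v0 ->
  exists v, P v /\ (forall w1 w2, e v w1 -> e v w2 -> w1 = w2).
Proof.
move=> sy ir fo eP Pv0.
suff : forall m s, #|T| - size s <= m -> path e v0 s -> uniq (v0 :: s) ->
  exists v, P v /\ (forall w1 w2, e v w1 -> e v w2 -> w1 = w2).
  by move/(_ #|T| [::]); apply => //; rewrite subn0.
elim=> [|m IH] s hm ps un.
  exfalso; have := card_uniqP un; have := max_card (mem (v0 :: s)).
  move=> h1 h2; rewrite h2 /= in h1.
  by move: hm; rewrite leqn0 subn_eq0 leqNgt h1.
case: (boolP [exists w, e (last v0 s) w && (w \notin v0 :: s)]).
  case/existsP => w /andP[ew wn]; apply: (IH (rcons s w)).
  - rewrite size_rcons; lia.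
  - by rewrite rcons_path ps ew.
  - by rewrite -rcons_cons rcons_uniq wn un.
move=> /existsPn nw; exists (last v0 s); split.
  case/lastP: s ps {hm un nw} => [//|s y]; rewrite rcons_path last_rcons.
  by case/andP => _; apply: eP.
have key : forall w, e (last v0 s) w -> exists q, v0 :: s = q ++ [:: w; last v0 s].
  move=> w ew; apply: pen_lemma => //; by have := nw w; rewrite ew /= negbK.
move=> w1 w2 /key[q1 e1] /key[q2 e2].
have e12 := etrans (esym e1) e2.
have sz : size q1 = size q2.
  by have := congr1 size e12; rewrite !size_cat /= => /addIn.
have := congr1 (fun t => nth w1 t (size q1)) e12.
by rewrite /= !nth_cat -sz ltnn subnn.
Qed.

Lemma nearest_up (P : pred nat) a b : a < b -> P b ->
  exists c, [/\ a < c <= b, P c & forall x, a < x -> x < c -> ~~ P x].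
Proof.
move=> ab pb.
have ex : exists c, (a < c) && P c by exists b; rewrite ab pb.
case: (ex_minnP ex) => c /andP[ac pc] cmin; exists c; split => //.
  by rewrite ac /=; apply: cmin; rewrite ab pb.
move=> x ax xc; apply/negP => px; have := cmin x; rewrite ax px => /(_ isT); lia.
Qed.

Lemma nearest_down (P : pred nat) a b : b < a -> P b ->
  exists c, [/\ b <= c < a, P c & forall x, c < x -> x < a -> ~~ P x].
Proof.
move=> ba pb.
have ex : exists c, (c < a) && P c by exists b; rewrite ba pb.
have ub : forall c, (c < a) && P c -> c <= a by move=> c /andP[ca _]; lia.
case: (ex_maxnP ex ub) => c /andP[ca pc] cmax; exists c; split => //.
  by rewrite ca andbT; apply: cmax; rewrite ba pb.
move=> x cx xa; apply/negP => px; have := cmax x; rewrite xa px => /(_ isT); lia.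
Qed.

Lemma sb_sym a b x : strictly_between a b x = strictly_between b a x.
Proof. by rewrite /strictly_between minnC maxnC. Qed.

Lemma cell_adj_sym k l (M : gmatrix k l) : symmetric (cell_adj M).
Proof.
move=> [c1 c2] [d1 d2]; rewrite /cell_adj /=.
have E1 : ((c1 == d1) && [forall j : 'I_l, strictly_between c2 d2 j ==> entry_eqb (M c1 j) Empt])
  = ((d1 == c1) && [forall j : 'I_l, strictly_between d2 c2 j ==> entry_eqb (M d1 j) Empt]).
  rewrite [c1 == d1]eq_sym; case: eqP => //= ->.
  by apply: eq_forallb => j; rewrite sb_sym.
have E2 : ((c2 == d2) && [forall i : 'I_k, strictly_between c1 d1 i ==> entry_eqb (M i c2) Empt])
  = ((d2 == c2) && [forall i : 'I_k, strictly_between d1 c1 i ==> entry_eqb (M i d2) Empt]).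
  rewrite [c2 == d2]eq_sym; case: eqP => //= ->.
  by apply: eq_forallb => i; rewrite sb_sym.
rewrite E1 E2 [(c1, c2) == _]eq_sym.
by case: (nonempty_cell M (c1, c2)); case: (nonempty_cell M (d1, d2)).
Qed.

Lemma cell_adj_irr k l (M : gmatrix k l) : irreflexive (cell_adj M).
Proof. by move=> c; rewrite /cell_adj eqxx /= !andbF. Qed.

Lemma cell_adj_ne k l (M : gmatrix k l) c d : cell_adj M c d -> nonempty_cell M d.
Proof. by case/and4P. Qed.

Lemma ne_entry k l (M : gmatrix k l) i j :
  ~~ nonempty_cell M (i, j) -> entry_eqb (M i j) Empt.
Proof. by rewrite /nonempty_cell negbK. Qed.

Lemma col_nb_up k l (M : gmatrix k l) (i : 'I_k) (j j1 : 'I_l) :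
  nonempty_cell M (i, j) -> nonempty_cell M (i, j1) -> j < j1 ->
  exists j2 : 'I_l, j < j2 <= j1 /\ cell_adj M (i, j) (i, j2).
Proof.
move=> nej nej1 jj1.
pose P x := [exists j' : 'I_l, (nat_of_ord j' == x) && nonempty_cell M (i, j')].
have Pj1 : P j1 by apply/existsP; exists j1; rewrite eqxx nej1.
have [c [/andP[jc cj1] /existsP[j2 /andP[/eqP ej2 nej2]] btw]] := nearest_up jj1 Pj1.
exists j2; rewrite ej2 jc cj1; split => //.
rewrite /cell_adj nej nej2 /=.
have -> : (i, j) != (i, j2).
  by apply/negP => /eqP [] /(congr1 (@nat_of_ord _)); rewrite ej2 => e; rewrite e ltnn in jc.
rewrite eqxx /=; apply/orP; left; apply/forallP => j'; apply/implyP.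
rewrite /strictly_between /minn /maxn ej2 jc => /andP[a b]; apply: ne_entry.
apply/negP => nej'; have := btw j' a b; rewrite /P; move/existsPn/(_ j').
by rewrite eqxx nej'.
Qed.

Lemma col_nb_down k l (M : gmatrix k l) (i : 'I_k) (j j1 : 'I_l) :
  nonempty_cell M (i, j) -> nonempty_cell M (i, j1) -> j1 < j ->
  exists j2 : 'I_l, j1 <= j2 < j /\ cell_adj M (i, j) (i, j2).
Proof.
move=> nej nej1 jj1.
pose P x := [exists j' : 'I_l, (nat_of_ord j' == x) && nonempty_cell M (i, j')].
have Pj1 : P j1 by apply/existsP; exists j1; rewrite eqxx nej1.
have [c [/andP[jc cj1] /existsP[j2 /andP[/eqP ej2 nej2]] btw]] := nearest_down jj1 Pj1.
exists j2; rewrite ej2 jc cj1; split => //.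
rewrite /cell_adj nej nej2 /=.
have -> : (i, j) != (i, j2).
  by apply/negP => /eqP [] /(congr1 (@nat_of_ord _)); rewrite ej2 => e; rewrite e ltnn in cj1.
rewrite eqxx /=; apply/orP; left; apply/forallP => j'; apply/implyP.
rewrite /strictly_between /minn /maxn ej2 (ltnNge j c) (ltnW cj1) /= => /andP[a b]; apply: ne_entry.
apply/negP => nej'; have := btw j' a b; rewrite /P; move/existsPn/(_ j').
by rewrite eqxx nej'.
Qed.

Lemma row_nb_up k l (M : gmatrix k l) (i i1 : 'I_k) (j : 'I_l) :
  nonempty_cell M (i, j) -> nonempty_cell M (i1, j) -> i < i1 ->
  exists i2 : 'I_k, i < i2 <= i1 /\ cell_adj M (i, j) (i2, j).
Proof.
move=> nei nei1 ii1.
pose P x := [exists i' : 'I_k, (nat_of_ord i' == x) && nonempty_cell M (i', j)].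
have Pi1 : P i1 by apply/existsP; exists i1; rewrite eqxx nei1.
have [c [/andP[ic ci1] /existsP[i2 /andP[/eqP ei2 nei2]] btw]] := nearest_up ii1 Pi1.
exists i2; rewrite ei2 ic ci1; split => //.
rewrite /cell_adj nei nei2 /=.
have -> : (i, j) != (i2, j).
  by apply/negP => /eqP [] /(congr1 (@nat_of_ord _)); rewrite ei2 => e; rewrite e ltnn in ic.
rewrite eqxx /=; apply/orP; right; apply/forallP => i'; apply/implyP.
rewrite /strictly_between /minn /maxn ei2 ic => /andP[a b]; apply: ne_entry.
apply/negP => nei'; have := btw i' a b; rewrite /P; move/existsPn/(_ i').
by rewrite eqxx nei'.
Qed.

Lemma row_nb_down k l (M : gmatrix k l) (i i1 : 'I_k) (j : 'I_l) :
  nonempty_cell M (i, j) -> nonempty_cell M (i1, j) -> i1 < i ->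
  exists i2 : 'I_k, i1 <= i2 < i /\ cell_adj M (i, j) (i2, j).
Proof.
move=> nei nei1 ii1.
pose P x := [exists i' : 'I_k, (nat_of_ord i' == x) && nonempty_cell M (i', j)].
have Pi1 : P i1 by apply/existsP; exists i1; rewrite eqxx nei1.
have [c [/andP[ic ci1] /existsP[i2 /andP[/eqP ei2 nei2]] btw]] := nearest_down ii1 Pi1.
exists i2; rewrite ei2 ic ci1; split => //.
rewrite /cell_adj nei nei2 /=.
have -> : (i, j) != (i2, j).
  by apply/negP => /eqP [] /(congr1 (@nat_of_ord _)); rewrite ei2 => e; rewrite e ltnn in ci1.
rewrite eqxx /=; apply/orP; right; apply/forallP => i'; apply/implyP.
rewrite /strictly_between /minn /maxn ei2 (ltnNge i c) (ltnW ci1) /= => /andP[a b]; apply: ne_entry.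
apply/negP => nei'; have := btw i' a b; rewrite /P; move/existsPn/(_ i').
by rewrite eqxx nei'.
Qed.

Definition deg1 k l (M : gmatrix k l) X :=
  forall d1 d2, cell_adj M X d1 -> cell_adj M X d2 -> d1 = d2.

Lemma leaf_line k l (M : gmatrix k l) (i : 'I_k) (j : 'I_l) :
  nonempty_cell M (i, j) -> deg1 M (i, j) ->
  (forall j', j' != j -> ~~ nonempty_cell M (i, j')) \/
  (forall i', i' != i -> ~~ nonempty_cell M (i', j)).
Proof.
move=> ne dg.
case Hc : [forall j' : 'I_l, (j' != j) ==> ~~ nonempty_cell M (i, j')].
  by left => j' nj; move/forallP: Hc => /(_ j') /implyP; apply.
right => i' ni'; apply/negP => nei'.
move/negbT/forallPn: Hc => [j']; rewrite negb_imply negbK => /andP[nj nej'].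
have [j2 [nj2 a1]] : exists j2 : 'I_l, j2 != j /\ cell_adj M (i, j) (i, j2).
  case: (ltngtP j j') => [lt|lt|/val_inj e]; last by rewrite e eqxx in nj.
    have [j2 [/andP[a b] c]] := col_nb_up ne nej' lt.
    by exists j2; split => //; apply/negP => /eqP e; rewrite e ltnn in a.
  have [j2 [/andP[a b] c]] := col_nb_down ne nej' lt.
  by exists j2; split => //; apply/negP => /eqP e; rewrite e ltnn in b.
have [i2 [ni2 a2]] : exists i2 : 'I_k, i2 != i /\ cell_adj M (i, j) (i2, j).
  case: (ltngtP i i') => [lt|lt|/val_inj e]; last by rewrite e eqxx in ni'.
    have [i2 [/andP[a b] c]] := row_nb_up ne nei' lt.
    by exists i2; split => //; apply/negP => /eqP e; rewrite e ltnn in a.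
  have [i2 [/andP[a b] c]] := row_nb_down ne nei' lt.
  by exists i2; split => //; apply/negP => /eqP e; rewrite e ltnn in b.
by have [] := dg _ _ a1 a2 => e _; rewrite e eqxx in ni2.
Qed.

Definition rmcell k l (M : gmatrix k l) (X : 'I_k * 'I_l) : gmatrix k l :=
  fun i j => if (i, j) == X then Empt else M i j.

Lemma rm_ne k l (M : gmatrix k l) X c :
  nonempty_cell (rmcell M X) c = (c != X) && nonempty_cell M c.
Proof. by case: c => i j; rewrite /nonempty_cell /rmcell /=; case: ifP. Qed.

Lemma rm_adj k l (M : gmatrix k l) X :
  nonempty_cell M X -> deg1 M X -> subrel (cell_adj (rmcell M X)) (cell_adj M).
Proof.
case: X => x1 x2 neX dg [c1 c2] [d1 d2].
rewrite /cell_adj !rm_ne => /and4P[/andP[cX cne] /andP[dX dne] cd H].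
rewrite cne dne cd /=.
have key : forall (j : 'I_l), c1 = d1 -> strictly_between c2 d2 j -> (c1, j) = (x1, x2) -> False.
  move=> j e sb [e1 e2]; subst.
  have ne1 : nonempty_cell M (x1, c2) by [].
  have ne2 : nonempty_cell M (x1, d2) by [].
  move: sb; rewrite /strictly_between.
  case: (ltngtP c2 d2) => [lt|lt|e].
  - move=> /andP[a b].
    have [j2 [/andP[a1 b1] h1]] := col_nb_down neX ne1 a.
    have [j3 [/andP[a2 b2] h2]] := col_nb_up neX ne2 b.
    by have [] := dg _ _ h1 h2 => /(congr1 (@nat_of_ord _)) ee; lia.
  - move=> /andP[a b].
    have [j2 [/andP[a1 b1] h1]] := col_nb_down neX ne2 a.
    have [j3 [/andP[a2 b2] h2]] := col_nb_up neX ne1 b.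
    by have [] := dg _ _ h1 h2 => /(congr1 (@nat_of_ord _)) ee; lia.
  - move=> /andP[a b]; lia.
have key2 : forall (i : 'I_k), c2 = d2 -> strictly_between c1 d1 i -> (i, c2) = (x1, x2) -> False.
  move=> i e sb [e1 e2]; subst.
  have ne1 : nonempty_cell M (c1, x2) by [].
  have ne2 : nonempty_cell M (d1, x2) by [].
  move: sb; rewrite /strictly_between.
  case: (ltngtP c1 d1) => [lt|lt|e].
  - move=> /andP[a b].
    have [j2 [/andP[a1 b1] h1]] := row_nb_down neX ne1 a.
    have [j3 [/andP[a2 b2] h2]] := row_nb_up neX ne2 b.
    by have [] := dg _ _ h1 h2 => /(congr1 (@nat_of_ord _)) ee; lia.
  - move=> /andP[a b].
    have [j2 [/andP[a1 b1] h1]] := row_nb_down neX ne2 a.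
    have [j3 [/andP[a2 b2] h2]] := row_nb_up neX ne1 b.
    by have [] := dg _ _ h1 h2 => /(congr1 (@nat_of_ord _)) ee; lia.
  - move=> /andP[a b]; lia.
move: H; rewrite /= => H.
case/orP: H => /andP[/eqP e /forallP h]; apply/orP; [left|right]; rewrite e eqxx /=;
  apply/forallP => j; apply/implyP => sb.
  have := implyP (h j); rewrite -e => /(_ sb); rewrite /rmcell; case: ifP => // /eqP EX _.
  by case: (key j e sb EX).
have := implyP (h j); rewrite -e => /(_ sb); rewrite /rmcell; case: ifP => // /eqP EX _.
by case: (key2 j e sb EX).
Qed.

Section Acyc.
Variables (n k l : nat) (pi : 'S_n) (cf : 'I_n -> 'I_k) (rf : 'I_n -> 'I_l)
  (dc : 'I_k -> bool) (dr : 'I_l -> bool).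

Definition colR (p q : 'I_n) :=
  (cf p == cf q) && (if dc (cf p) then p < q else q < p).
Definition rowR (p q : 'I_n) :=
  (rf (pi p) == rf (pi q)) && (if dr (rf (pi p)) then pi p < pi q else pi q < pi p).
Definition RR p q := colR p q || rowR p q.

Hypothesis H0 : forall p q, cf p = cf q -> rf (pi p) = rf (pi q) -> colR p q = rowR p q.

Lemma colR_trans : transitive colR.
Proof.
move=> y x z /andP[/eqP e1 h1] /andP[/eqP e2 h2]; rewrite /colR e1 e2 eqxx /=.
rewrite e1 in h1; rewrite -e2; case: (dc (cf y)) h1 h2 => /= h1 h2; exact: ltn_trans h1 h2 || exact: ltn_trans h2 h1.
Qed.

Lemma rowR_trans : transitive rowR.
Proof.
move=> y x z /andP[/eqP e1 h1] /andP[/eqP e2 h2]; rewrite /rowR e1 e2 eqxx /=.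
rewrite e1 in h1; rewrite -e2; case: (dr (rf (pi y))) h1 h2 => /= h1 h2; exact: ltn_trans h1 h2 || exact: ltn_trans h2 h1.
Qed.

Lemma colR_irr p : colR p p = false.
Proof. by rewrite /colR; case: (dc _); rewrite ltnn andbF. Qed.

Definition ne (M : gmatrix k l) p := nonempty_cell M (cf p, rf (pi p)).
Definition RS (M : gmatrix k l) p q := [&& ne M p, ne M q & RR p q].

Lemma cycle_all_ne M s : path.cycle (RS M) s -> all (ne M) s.
Proof.
move=> hc; apply/allP => x xs; have := next_cycle hc xs; by case/and3P.
Qed.

Lemma step_col (M : gmatrix k l) (X : 'I_k * 'I_l) u z :
  (forall i', i' != X.1 -> ~~ nonempty_cell M (i', X.2)) ->
  (cf z, rf (pi z)) = X -> ne M u -> (RR u z -> colR u z) /\ (RR z u -> colR z u).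
Proof.
move=> LR hz neu.
have same : rf (pi u) = rf (pi z) -> cf u = cf z.
  move=> er; apply/eqP; apply/negP => /negP nc.
  have := LR (cf u); rewrite -hz /= => /(_ nc); rewrite -er.
  by rewrite /ne in neu; rewrite neu.
split => /orP[//|/[dup] hr /andP[/eqP er _]].
  by rewrite H0 //; apply: same.
by rewrite H0 //; apply/esym/same.
Qed.

Lemma step_row (M : gmatrix k l) (X : 'I_k * 'I_l) u z :
  (forall j', j' != X.2 -> ~~ nonempty_cell M (X.1, j')) ->
  (cf z, rf (pi z)) = X -> ne M u -> (RR u z -> rowR u z) /\ (RR z u -> rowR z u).
Proof.
move=> LC hz neu.
have same : cf u = cf z -> rf (pi u) = rf (pi z).
  move=> ec; apply/eqP; apply/negP => /negP nc.
  have := LC (rf (pi u)); rewrite -hz /= => /(_ nc); rewrite -ec.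
  by rewrite /ne in neu; rewrite neu.
split => /orP[/[dup] hc /andP[/eqP ec _]|//].
  by rewrite -H0 //; apply: same.
by rewrite -H0 //; apply/esym/same.
Qed.

Lemma no_cycle N : forall M : gmatrix k l,
  #|[set c | nonempty_cell M c]| <= N -> forest (cell_adj M) ->
  forall s, path.cycle (RS M) s -> s = [::].
Proof.
elim: N => [|N IH] M hN fo [//|x s] hc; exfalso.
  have := cycle_all_ne hc => /allP /(_ x (mem_head _ _)) nex.
  have : 0 < #|[set c | nonempty_cell M c]| by apply/card_gt0P; exists (cf x, rf (pi x)); rewrite inE.
  lia.
have := cycle_all_ne hc => /allP /(_ x (mem_head _ _)) nex.
have [X [neX dgX]] := forest_leaf (cell_adj_sym M) (cell_adj_irr M) fo
   (@cell_adj_ne _ _ M) nex.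
pose inX z := (cf z, rf (pi z)) == X.
case: (boolP (has (fun z => ~~ inX z) (x :: s))).
  case/hasP => y yin ny.
  case: (rot_to yin) => i s' er.
  have hc2 : path.cycle (RS M) (y :: s') by rewrite -er rot_cycle.
  have TR : forall z, z \in y :: s' -> ~~ ~~ inX z -> forall u v,
      RS M u z -> RS M z v -> RS M u v.
    move=> z _; rewrite negbK => /eqP hz u v /and3P[neu nez ruz] /and3P[_ nev rzv].
    rewrite /RS neu nev /=.
    case: X hz neX dgX {inX ny} => X1 X2 hz neX dgX.
    case: (leaf_line neX dgX) => [LC|LR].
      have [h1 _] := step_row (X := (X1, X2)) LC hz neu.
      have [_ h2] := step_row (X := (X1, X2)) LC hz nev.
      by rewrite /RR (rowR_trans (h1 ruz) (h2 rzv)) orbT.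
    have [h1 _] := step_col (X := (X1, X2)) LR hz neu.
    have [_ h2] := step_col (X := (X1, X2)) LR hz nev.
    by rewrite /RR (colR_trans (h1 ruz) (h2 rzv)).
  have hf := @cycle_filter _ (RS M) (fun z => ~~ inX z) y s' ny TR hc2.
  pose M' := rmcell M X.
  have fo' : forest (cell_adj M').
    move=> t ut st; apply/negP => /(sub_cycle (rm_adj neX dgX)) hct.
    by have := fo t ut st; rewrite hct.
  have hN' : #|[set c | nonempty_cell M' c]| <= N.
    have : [set c | nonempty_cell M' c] \proper [set c | nonempty_cell M c].
      apply/properP; split.
        by apply/subsetP => c; rewrite !inE rm_ne => /andP[].
      by exists X; rewrite !inE // rm_ne eqxx.
    move/proper_card; lia.
  have hf' : path.cycle (RS M') [seq z <- y :: s' | ~~ inX z].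
    apply: (sub_in_cycle (P := fun z => ~~ inX z)) (filter_all _ _) hf.
    move=> p q pX qX /and3P[nep neq r]; rewrite /RS /ne !rm_ne.
    move: pX qX nep neq; rewrite /inX /ne !unfold_in /= => pX qX nep neq.
    by rewrite nep neq r pX qX.
  by have := IH M' hN' fo' _ hf'; rewrite /= ny.
move/hasPn => allX.
have hcol : path.cycle colR (x :: s).
  apply: (sub_in_cycle (P := inX)) hc.
    move=> p q /eqP pX /eqP qX /and3P[_ _ /orP[//|r]].
    by case: (etrans pX (esym qX)) => e1 e2; rewrite H0.
  by apply/allP => z zs; have := allX z zs; rewrite negbK.
by have := trans_cycle_refl colR_trans hcol; rewrite colR_irr.
Qed.

End Acyc.

Definition comb n (x0 : 'I_n) (p : seq 'I_n) : gtree n :=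
  foldl (fun t y => Node t (Leaf y)) (Leaf x0) p.

Lemma leaves_comb n (x0 : 'I_n) p : leaves (comb x0 p) = x0 :: p.
Proof.
elim/last_ind: p => [//|p y IH]; rewrite /comb foldl_rcons /= -/(comb x0 p) IH.
by rewrite cats1.
Qed.

Lemma cat_comb n (x0 : 'I_n) p : caterpillar (comb x0 p).
Proof.
elim/last_ind: p => [//|p y IH]; rewrite /comb foldl_rcons /= -/(comb x0 p) IH.
by rewrite orbT.
Qed.

Lemma gw_comb n (pi : 'S_n) W (x0 : 'I_n) (s : seq 'I_n) :
  (forall y, grid_complexity pi [set y] <= W) ->
  (forall A q, x0 :: s = A ++ q -> grid_complexity pi [set z in A] <= W) ->
  forall p q, s = p ++ q -> grid_width pi (comb x0 p) <= W.
Proof.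
move=> hs hp; elim/last_ind => [|p y IH] q es; first exact: (hs x0).
rewrite /comb foldl_rcons -/(comb x0 p).
have G : forall a b cc, a <= W -> b <= W -> cc <= W -> maxn a (maxn b cc) <= W.
  by move=> a b cc ha hb hc; rewrite !geq_max ha hb hc.
rewrite [grid_width _ _]/=; apply: G.
- rewrite leaves_comb; apply: (hp _ q).
  by rewrite es /= cats1.
- by apply: (IH (y :: q)); rewrite es cat_rcons.
- exact: (hs y).
Qed.

Lemma lt_iff (a b x y : nat) : (a < b -> x < y) -> (b < a -> y < x) -> (a = b -> x = y) ->
  (a < b) = (x < y).
Proof.
move=> h1 h2 h3; case: (ltngtP a b) => h; first by rewrite h1.
  by apply/esym/negbTE; rewrite -leqNgt ltnW // h2.
by rewrite h3 // ltnn.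
Qed.

Section Main.
Variables (k l n : nat) (M : gmatrix k l) (pi : 'S_n)
  (cf : 'I_n -> 'I_k) (rf : 'I_n -> 'I_l) (c : 'I_k -> int) (r : 'I_l -> int).
Hypothesis hcf : interval_partition cf.
Hypothesis hrf : interval_partition rf.
Hypothesis hcell : forall i j, cell_ok pi cf rf i j (M i j).
Hypothesis hc : forall i, (c i = 1 \/ c i = -1)%R.
Hypothesis hr : forall j, (r j = 1 \/ r j = -1)%R.
Hypothesis hInc : forall i j, M i j = Inc -> (0 < c i * r j)%R.
Hypothesis hDec : forall i j, M i j = Dec -> (c i * r j < 0)%R.
Hypothesis fo : forest (cell_adj M).

Definition dc i := (c i == 1)%R.
Definition dr j := (r j == 1)%R.

Notation colR' := (colR cf dc).
Notation rowR' := (rowR pi rf dr).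
Notation RR' := (RR pi cf rf dc dr).

Lemma H0 : forall p q, cf p = cf q -> rf (pi p) = rf (pi q) -> colR' p q = rowR' p q.
Proof.
move=> p q e1 e2; rewrite /colR /rowR e1 e2 !eqxx /=.
have hcl := hcell (cf q) (rf (pi q)).
have inp : in_cell pi cf rf (cf q) (rf (pi q)) p by [].
have inq : in_cell pi cf rf (cf q) (rf (pi q)) q by [].
rewrite /dc /dr.
case E: (M (cf q) (rf (pi q))) hcl => hcl.
- have h := hInc E.
  have eq : (p < q) = (pi p < pi q).
    apply: lt_iff => [pq|qp|/val_inj ->] //; [exact: hcl _ _ inp inq pq | exact: hcl _ _ inq inp qp].
  have eq' : (q < p) = (pi q < pi p).
    apply: lt_iff => [pq|qp|/val_inj ->] //; [exact: hcl _ _ inq inp pq | exact: hcl _ _ inp inq qp].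
  case: (hc (cf q)) h => -> ; case: (hr (rf (pi q))) => -> //= _.
- have h := hDec E.
  have eq : (p < q) = (pi q < pi p).
    apply: lt_iff => [pq|qp|/val_inj ->] //; [exact: hcl _ _ inp inq pq | exact: hcl _ _ inq inp qp].
  have eq' : (q < p) = (pi p < pi q).
    apply: lt_iff => [pq|qp|/val_inj ->] //; [exact: hcl _ _ inq inp pq | exact: hcl _ _ inp inq qp].
  case: (hc (cf q)) h => -> ; case: (hr (rf (pi q))) => -> //= _.
- by case: (hcl p).
Qed.

Lemma all_ne p : ne pi cf rf M p.
Proof.
rewrite /ne /nonempty_cell /=.
have := hcell (cf p) (rf (pi p)); case: (M _ _) => // h.
by case: (h p).
Qed.

Lemma acyclic s : path.cycle RR' s -> s = [::].
Proof.
move=> hs; apply: (@no_cycle n k l pi cf rf dc dr H0 #|[set c | nonempty_cell M c]| M) => //.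
apply: (sub_cycle _ hs) => p q h; by rewrite /RS !all_ne.
Qed.

Definition phi p := #|[set q | connect RR' q p]|.

Lemma phi_lt p q : RR' p q -> phi p < phi q.
Proof.
move=> hpq; apply: proper_card; apply/properP; split.
  apply/subsetP => z; rewrite !inE => hz; apply: connect_trans hz (connect1 hpq).
exists q; rewrite !inE ?connect0 //.
apply/negP => /connectP [pth hp el].
have := @acyclic (q :: pth); rewrite /= rcons_path hp -el hpq => /(_ isT) //.
Qed.

Definition leP := fun a b => phi a <= phi b.
Definition sq := sort leP (enum 'I_n).

Lemma sq_pair : pairwise leP sq.
Proof.
rewrite -sorted_pairwise; last by move=> y x z; apply: leq_trans.
by apply: sort_sorted => a b; apply: leq_total.
Qed.

Lemma in_sq z : z \in sq.
Proof. by rewrite mem_sort mem_enum. Qed.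

Lemma prefix_le (A q : seq 'I_n) a b : sq = A ++ q -> a \in A -> b \in q -> phi a <= phi b.
Proof.
move=> e aA bq; have := sq_pair; rewrite e pairwise_cat => /and3P[/allrelP h _ _].
exact: h.
Qed.

Lemma not_in_prefix (A q : seq 'I_n) z : sq = A ++ q -> z \notin A -> z \in q.
Proof. by move=> e; have := in_sq z; rewrite e mem_cat => /orP[->|]. Qed.

Lemma gc_bound (A : {set 'I_n}) :
  (forall x y z : 'I_n, x < y -> y < z -> x \in A -> z \in A -> cf x = cf z -> y \in A) ->
  (forall x y z : 'I_n, x < y -> y < z -> x \in pi @: A -> z \in pi @: A -> rf x = rf z ->
     y \in pi @: A) ->
  grid_complexity pi A <= maxn k l.
Proof.
move=> h1 h2; rewrite /grid_complexity geq_max.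
rewrite (leq_trans (intv_bound hcf h1)) ?leq_maxl //.
by rewrite (leq_trans (intv_bound hrf h2)) ?leq_maxr.
Qed.

Lemma gc_single y : grid_complexity pi [set y] <= maxn k l.
Proof.
apply: gc_bound.
  by move=> a b d ab bd; rewrite !inE => /eqP ea /eqP ed; move: ab bd; rewrite ea ed; lia.
by move=> a b d ab bd; rewrite imset_set1 !inE => /eqP ea /eqP ed; move: ab bd; rewrite ea ed; lia.
Qed.

Lemma gc_prefix A q : sq = A ++ q -> grid_complexity pi [set z in A] <= maxn k l.
Proof.
move=> e; apply: gc_bound.
  move=> x y z xy yz; rewrite !inE => xA zA exz.
  have ey : cf x = cf y.
    by apply: ord_inj; apply/eqP; rewrite eqn_leq (hcf (ltnW xy)) /= exz (hcf (ltnW yz)).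
  case: (boolP (y \in A)) => // yA.
  have yq := not_in_prefix e yA.
  exfalso.
  case D: (dc (cf x)).
    have h1 : RR' y z by rewrite /RR /colR -ey -exz eqxx D yz.
    have := phi_lt h1; have := prefix_le e zA yq; lia.
  have h1 : RR' y x by rewrite /RR /colR -ey eqxx D xy.
  have := phi_lt h1; have := prefix_le e xA yq; lia.
move=> u v w uv vw /imsetP[a aA eu] /imsetP[b bA ew] eab; subst u w.
rewrite !inE in aA bA.
have ev : rf (pi a) = rf v.
  by apply: ord_inj; apply/eqP; rewrite eqn_leq (hrf (ltnW uv)) /= eab (hrf (ltnW vw)).
pose cc := (pi^-1)%g v.
have pcc : pi cc = v by rewrite /cc permKV.
case: (boolP (v \in [set pi x | x in [set z in A]])) => // vB; exfalso.
have cA : cc \notin A.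
  by apply/negP => cA; apply: (negP vB); apply/imsetP; exists cc; rewrite ?inE.
have cq := not_in_prefix e cA.
case D: (dr (rf (pi a))).
  have h1 : RR' cc b by rewrite /RR /rowR pcc -ev -eab eqxx D vw orbT.
  have := phi_lt h1; have := prefix_le e bA cq; lia.
have h1 : RR' cc a by rewrite /RR /rowR pcc -ev eqxx D uv orbT.
have := phi_lt h1; have := prefix_le e aA cq; lia.
Qed.

Lemma result : 0 < n -> pathwidth_le pi (maxn k l).
Proof.
move=> n0.
have : size sq = n by rewrite size_sort size_enum_ord.
case E: sq => [|x0 p]; first by move=> /= e; rewrite -e in n0.
move=> _.
exists (comb x0 p); split; last split.
- by rewrite /grid_tree leaves_comb -E /sq perm_sort perm_refl.
- exact: cat_comb.
- apply: (gw_comb (s := p) gc_single _ (q := [::])); last by rewrite cats0.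
  by move=> A q e; apply: (gc_prefix (q := q)); rewrite E.
Qed.

End Main.

Theorem mainTheorem3 (k l : nat) (M : gmatrix k l) :
  consistent_orientation M ->
  forest (cell_adj M) ->
  forall (n : nat) (pi : 'S_n), 0 < n -> in_Grid M pi ->
    pathwidth_le pi (maxn k l).
Proof.
move=> [c [r [hc [hr [hInc hDec]]]]] fo n pi n0 [cf [rf [hcf [hrf hcell]]]].
exact: (result hcf hrf hcell hc hr hInc hDec fo n0).
Qed.
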